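(* Let $a_n$ be the number of $n$-multisets of $[n]$ with no consecutive integers. Then \[\sum_{n\geq 1} a_n z^n \;=\; \frac{1-3z-\sqrt{1-2z-3z^2}}{6z-2}.\]
   Context: An $n$-multiset of $[n]=\{1,\dots,n\}$ is identified with the non-decreasing sequence $\pi_1\leq\pi_2\leq\cdots\leq\pi_n$ of its elements (elements may repeat). It has no consecutive integers if $\pi_{i+1}\neq\pi_i+1$ for all $i\in[n-1]$. *)

(* Defs.v *)
From mathcomp Require Import all_boot.

(* An n-multiset of [n] = {1,...,n} is identified with its non-decreasing
   sequence pi_1 <= ... <= pi_n of elements of [n].  We encode an element
   i : 'I_n as the integer i.+1, so values range exactly over {1,...,n}. *)
Definition multiset_seq (n : nat) (t : n.-tuple 'I_n) : seq nat :=
  map (fun i : 'I_n => (nat_of_ord i).+1) t.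

Definition is_multiset_seq (s : seq nat) : bool := sorted leq s.

Definition no_consecutive (s : seq nat) : bool :=
  sorted (fun x y => y != x.+1) s.

Definition a (n : nat) : nat :=
  #|[pred t : n.-tuple 'I_n |
      is_multiset_seq (multiset_seq n t) && no_consecutive (multiset_seq n t)]|.

(* Main.v *)
Require Import Defs.
From mathcomp Require Import all_boot zify ring.
Set Implicit Arguments. Unset Strict Implicit.

Definition Fb m i := 'C(m, i) * 'C(m.+1 - i, i.+1).
Definition Xb m i := if i is j.+1 then 'C(m.+1, j) * 'C(m.+1 - j, j.+1) else 0.
Arguments Xb : simpl never.
Arguments Fb : simpl never.

Lemma E1 m i k : m + 2 = 2*i + k ->
  Fb (m+2) i * (i`! * i.+1`! * k`!) = (m+2)`! * (m+3-i).
Proof.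
move=> hk; rewrite /Fb.
have h1 := @bin_fact (m+2) i (ltac:(lia)).
have h2 := @bin_fact ((m+2).+1 - i) i.+1 (ltac:(lia)).
have e1: (m+2).+1 - i - i.+1 = k by lia.
have e2: (m+2).+1 - i = (m+2-i).+1 by lia.
rewrite e1 e2 (factS (m+2-i)) in h2.
have e3: m+3-i = (m+2-i).+1 by lia.
rewrite e3 e2.
transitivity ('C(m+2,i) * i`! * ('C((m+2-i).+1, i.+1) * (i.+1`! * k`!))); first by ring.
rewrite h2 -h1. ring.
Qed.

Lemma E2 m i k : m + 2 = 2*i + k ->
  Fb (m+1) i * (i`! * i.+1`! * k`!) = (m+1)`! * (m+2-i) * k.
Proof.
move=> hk; rewrite /Fb.
case: k hk => [|k] hk.
  rewrite (@bin_small _ i.+1) ?muln0 ?mul0n //; lia.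
have h1 := @bin_fact (m+1) i (ltac:(lia)).
have h2 := @bin_fact ((m+1).+1 - i) i.+1 (ltac:(lia)).
have e1: (m+1).+1 - i - i.+1 = k by lia.
have e2: (m+1).+1 - i = (m+1-i).+1 by lia.
rewrite e1 e2 (factS (m+1-i)) in h2.
have e3: m+2-i = (m+1-i).+1 by lia.
rewrite e3 e2 (factS k).
transitivity ('C(m+1,i) * i`! * ('C((m+1-i).+1, i.+1) * (i.+1`! * k`!)) * k.+1); first by ring.
rewrite h2 -h1. ring.
Qed.

Lemma E3 m i k : m + 2 = 2*i + k ->
  Fb m i * (i`! * i.+1`! * k`!) = m`! * (m+1-i) * (k * (k-1)).
Proof.
move=> hk; rewrite /Fb.
case: k hk => [|[|k]] hk.
- rewrite (@bin_small _ i.+1) ?muln0 ?mul0n //; lia.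
- rewrite (@bin_small _ i.+1) ?muln0 ?mul0n //; lia.
have h1 := @bin_fact m i (ltac:(lia)).
have h2 := @bin_fact (m.+1 - i) i.+1 (ltac:(lia)).
have e1: m.+1 - i - i.+1 = k by lia.
have e2: m.+1 - i = (m-i).+1 by lia.
rewrite e1 e2 (factS (m-i)) in h2.
have e3: m+1-i = (m-i).+1 by lia.
have e4: k.+2 * (k.+2 - 1) = k.+2 * k.+1 by lia.
rewrite e3 e2 e4 (factS k.+1) (factS k).
transitivity ('C(m,i) * i`! * ('C((m-i).+1, i.+1) * (i.+1`! * k`!)) * (k.+2 * k.+1)); first by ring.
rewrite h2 -h1. ring.
Qed.

Lemma E4 m i k : m + 2 = 2*i + k ->
  Xb m i.+1 * (i`! * i.+1`! * k`!) = (m+1)`! * (k * (k-1)).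
Proof.
move=> hk; rewrite /Xb.
case: k hk => [|[|k]] hk.
- rewrite (@bin_small _ i.+1) ?muln0 ?mul0n //; lia.
- rewrite (@bin_small _ i.+1) ?muln0 ?mul0n //; lia.
have h1 := @bin_fact m.+1 i (ltac:(lia)).
have h2 := @bin_fact (m.+1 - i) i.+1 (ltac:(lia)).
have e1: m.+1 - i - i.+1 = k by lia.
rewrite e1 in h2.
have e4: k.+2 * (k.+2 - 1) = k.+2 * k.+1 by lia.
have e5: m.+1 - i = m + 1 - i by lia.
rewrite e4 (factS k.+1) (factS k) addn1.
transitivity ('C(m.+1,i) * i`! * ('C(m.+1 - i, i.+1) * (i.+1`! * k`!)) * (k.+2 * k.+1)); first by ring.
rewrite h2 -h1. ring.
Qed.

Lemma E5 m i k : m + 2 = 2*i + k ->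
  Xb m i * (i`! * i.+1`! * k`!) = (m+1)`! * (i * (i+1)).
Proof.
move=> hk; rewrite /Xb.
case: i hk => [|j] hk; first by rewrite mul0n muln0.
have h1 := @bin_fact m.+1 j (ltac:(lia)).
have h2 := @bin_fact (m.+1 - j) j.+1 (ltac:(lia)).
have e1: m.+1 - j - j.+1 = k by lia.
rewrite e1 in h2.
have e5: m.+1 - j = (m.+1 - j) by lia.
rewrite (factS j.+1) (factS j) addn1.
transitivity ('C(m.+1,j) * j`! * ('C(m.+1 - j, j.+1) * (j.+1`! * k`!)) * (j.+2 * j.+1)); first by rewrite factS; ring.
rewrite h2 -h1. ring.
Qed.

Lemma local m i : (m+3)*Fb (m+2) i + 2*(2*m+3-2*i)*Xb m i.+1 =
  2*(m+3)*Fb (m+1) i + 3*(m+1)*Fb m i + 2*(2*m+5-2*i)*Xb m i.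
Proof.
case: (leqP (2*i) (m+2)) => h; last first.
  have z1 : Fb (m+2) i = 0 by rewrite /Fb (@bin_small ((m+2).+1 - i) i.+1) ?muln0 //; lia.
  have z2 : Fb (m+1) i = 0 by rewrite /Fb (@bin_small ((m+1).+1 - i) i.+1) ?muln0 //; lia.
  have z3 : Fb m i = 0 by rewrite /Fb (@bin_small (m.+1 - i) i.+1) ?muln0 //; lia.
  have z4 : Xb m i.+1 = 0 by rewrite /Xb (@bin_small (m.+1 - i) i.+1) ?muln0 //; lia.
  have z5 : Xb m i = 0.
    case: i h {z1 z2 z3 z4} => [|j] h //; rewrite /Xb.
    rewrite (@bin_small (m.+1 - j) j.+1) ?muln0 //; lia.
  by rewrite z1 z2 z3 z4 z5 !muln0.
pose k := m + 2 - 2*i.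
have hk : m + 2 = 2*i + k by rewrite /k; lia.
have Kpos : 0 < i`! * i.+1`! * k`! by rewrite !muln_gt0 !fact_gt0.
apply/eqP; rewrite -(eqn_pmul2r Kpos); apply/eqP.
have e1 := E1 hk. have e2 := E2 hk. have e3 := E3 hk. have e4 := E4 hk. have e5 := E5 hk.
move: Kpos e1 e2 e3 e4 e5. move: (i`! * i.+1`! * k`!) => K Kpos e1 e2 e3 e4 e5.
transitivity ((m+3)*(Fb (m+2) i * K) + 2*(2*m+3-2*i)*(Xb m i.+1 * K)); first by ring.
rewrite e1 e4.
symmetry.
transitivity (2*(m+3)*(Fb (m+1) i * K) + 3*(m+1)*(Fb m i * K) + 2*(2*m+5-2*i)*(Xb m i * K)); first by ring.
rewrite e2 e3 e5. symmetry.
have f2 : (m+2)`! = (m+2)*(m+1)*m`! by rewrite addn2 addn1 !factS; ring.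
have f1 : (m+1)`! = (m+1)*m`! by rewrite addn1 !factS.
rewrite f2 f1.
move: (m`!) => f.
clear e1 e2 e3 e4 e5 Kpos.
case: k hk => [|[|k]] hk.
- have [j ej] : exists j, i = j.+1 by case: i h hk => [|j] h hk; [lia | exists j].
  have em : m = 2*j by lia.
  rewrite ej em.
  have -> : 2 * j + 3 - j.+1 = j + 2 by lia.
  have -> : 2 * j + 2 - j.+1 = j + 1 by lia.
  have -> : 2 * (2 * j) + 3 - 2 * j.+1 = 2*j+1 by lia.
  have -> : 2 * (2 * j) + 5 - 2 * j.+1 = 2*j+3 by lia.
  ring.
- have [j ej] : exists j, i = j.+1 by case: i h hk => [|j] h hk; [lia | exists j].
  have em : m = 2*j+1 by lia.
  rewrite ej em.
  have -> : 2 * j + 1 + 3 - j.+1 = j + 3 by lia.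
  have -> : 2 * j + 1 + 2 - j.+1 = j + 2 by lia.
  have -> : 2 * (2 * j + 1) + 3 - 2 * j.+1 = 2*j+3 by lia.
  have -> : 2 * (2 * j + 1) + 5 - 2 * j.+1 = 2*j+5 by lia.
  rewrite subnn. ring.
- have em : m = 2*i+k by lia.
  rewrite em.
  have -> : 2 * i + k + 3 - i = i + k + 3 by lia.
  have -> : 2 * i + k + 2 - i = i + k + 2 by lia.
  have -> : 2 * i + k + 1 - i = i + k + 1 by lia.
  have -> : 2 * (2 * i + k) + 3 - 2 * i = 2*i+2*k+3 by lia.
  have -> : 2 * (2 * i + k) + 5 - 2 * i = 2*i+2*k+5 by lia.
  have -> : k.+2 - 1 = k.+1 by lia.
  ring.
Qed.

Definition bs m := \sum_(0 <= i < m.+1) Fb m i.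

Lemma bs_widen m N : m < N -> \sum_(0 <= i < N) Fb m i = bs m.
Proof.
elim: N => [//|N IH] hN.
case: (ltnP m N) => h; last first.
  by have -> : N = m by lia.
rewrite big_nat_recr //= IH // /Fb bin_small // mul0n addn0 //.
Qed.

Lemma rec3 m : (m+3)*bs (m+2) = 2*(m+3)*bs (m+1) + 3*(m+1)*bs m.
Proof.
have S : \sum_(0 <= i < m.+4) ((m+3)*Fb (m+2) i + 2*(2*m+3-2*i)*Xb m i.+1) =
  \sum_(0 <= i < m.+4) (2*(m+3)*Fb (m+1) i + 3*(m+1)*Fb m i + 2*(2*m+5-2*i)*Xb m i).
  by apply: eq_bigr => i _; exact: local.
rewrite !big_split /= in S.
have T : \sum_(0 <= i < m.+4) 2*(2*m+3-2*i)*Xb m i.+1 =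
         \sum_(0 <= i < m.+4) 2*(2*m+5-2*i)*Xb m i.
  rewrite [LHS]big_nat_recr // [RHS]big_nat_recl //=.
  have -> : Xb m m.+4 = 0 by rewrite /Xb bin_small //; lia.
  have -> : Xb m 0 = 0 by [].
  rewrite muln0 addn0 muln0 add0n.
  apply: eq_bigr => i _; congr (_ * _); lia.
rewrite T in S.
move/eqP: S; rewrite eqn_add2r => /eqP S.
rewrite -!big_distrr /= in S.
rewrite !bs_widen in S; try lia.
Qed.

Definition sconv (y : nat -> nat) n := \sum_(0 <= i < n.+1) y i * y (n - i).

Lemma sym (y : nat -> nat) N :
  2 * \sum_(0 <= i < N.+1) i * y i * y (N - i) = N * sconv y N.
Proof.
rewrite /sconv mul2n -addnn.
rewrite [X in _ + X = _]big_nat_rev /=.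
rewrite -big_split big_distrr /=.
apply: eq_big_nat => i hi.
have e2 : 0 + N.+1 - i.+1 = N - i by lia.
have e : N - (N - i) = i by lia.
rewrite e2 e.
have hN : i + (N - i) = N by lia.
move: (N - i) hN => d hN. rewrite -hN. ring.
Qed.

Lemma qlem (y : nat -> nat) n :
  2 * \sum_(0 <= i < n.+1) (i-1) * y (i-1) * y (n - i) = (n-1) * sconv y (n-1).
Proof.
rewrite big_nat_recl // sub0n !mul0n add0n.
case: n => [|n]; first by rewrite big_geq.
rewrite -sym subn1 /=. congr (2 * _).
apply: eq_big_nat => i hi. by rewrite subn1 /= subSS.
Qed.

Lemma srec (y : nat -> nat)
  (Yr : forall n, n.+1 * y n.+1 = 2 * n.+1 * y n + 3 * (n-1) * y (n-1)) n :
  n.+1 * sconv y n.+1 = 2 * (n+2) * sconv y n + 3 * (n-1) * sconv y (n-1).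
Proof.
set P := \sum_(0 <= i < n.+1) i * y i * y (n - i).
set Q := \sum_(0 <= i < n.+1) (i-1) * y (i-1) * y (n - i).
have hp : 2 * P = n * sconv y n by rewrite sym.
have hq : 2 * Q = (n-1) * sconv y (n-1) by rewrite /Q qlem.
have h : n.+1 * sconv y n.+1 = 4 * P + 4 * sconv y n + 6 * Q.
  rewrite -sym big_nat_recl // mul0n mul0n add0n.
  have -> : \sum_(0 <= i < n.+1) i.+1 * y i.+1 * y (n.+1 - i.+1) =
            \sum_(0 <= i < n.+1) (2 * (i.+1 * y i * y (n - i)) + 3 * ((i-1) * y (i-1) * y (n - i))).
    apply: eq_big_nat => i hi. rewrite subSS Yr. ring.
  rewrite big_split /= -!big_distrr /=.
  have -> : \sum_(0 <= i < n.+1) i.+1 * y i * y (n - i) = P + sconv y n.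
    rewrite /P /sconv -big_split /=. apply: eq_big_nat => i _. ring.
  ring.
rewrite h.
have -> : 4 * P + 4 * sconv y n + 6 * Q = 2 * (2 * P) + 4 * sconv y n + 3 * (2 * Q) by ring.
rewrite hp hq. ring.
Qed.

Definition yb n := if n is m.+1 then 2 * bs m else 1.

Lemma bs0 : bs 0 = 1.
Proof. by rewrite /bs big_nat1 /Fb. Qed.
Lemma bs1 : bs 1 = 2.
Proof. by rewrite /bs big_nat_recr //= big_nat1 /Fb. Qed.

Lemma Yr n : n.+1 * yb n.+1 = 2 * n.+1 * yb n + 3 * (n-1) * yb (n-1).
Proof.
case: n => [|[|m]] /=.
- by rewrite bs0.
- by rewrite bs1 bs0.
have r := rec3 m.
rewrite !addn3 !addn2 !addn1 in r.
rewrite subn1 /=.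
transitivity (2 * (m.+3 * bs m.+2)); first by ring.
rewrite r. ring.
Qed.

Lemma s_val n : sconv yb n.+1 = 4 * 3^n /\ sconv yb n.+2 = 4 * 3^n.+1.
Proof.
have s0 : sconv yb 0 = 1 by rewrite /sconv big_nat1.
have s1 : sconv yb 1 = 4.
  have := srec Yr 0. by rewrite s0 mul1n.
have s2 : sconv yb 2 = 12.
  have := srec Yr 1. rewrite s1 /=. lia.
elim: n => [|n [IH1 IH2]]; first by rewrite s1 s2.
split=> //.
have := srec Yr n.+2.
rewrite IH1 IH2 /= !expnS => h.
apply/eqP; rewrite -(eqn_pmul2l (_ : 0 < n.+3)) //; apply/eqP.
rewrite h subn1 /=. ring.
Qed.

Lemma conv n : bs n + \sum_(0 <= k < n) bs k * bs (n.-1 - k) = 3^n.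
Proof.
have [h _] := s_val n.
have e : sconv yb n.+1 = 4 * (bs n + \sum_(0 <= k < n) bs k * bs (n.-1 - k)).
  rewrite /sconv big_nat_recl // big_nat_recr //= subnn /=.
  have -> : \sum_(0 <= i < n) 2 * bs i * yb (n.+1 - i.+1) = \sum_(0 <= i < n) 4 * (bs i * bs (n.-1 - i)).
    apply: eq_big_nat => i hi.
    have -> : n.+1 - i.+1 = (n.-1 - i).+1 by lia.
    rewrite /=. ring.
  rewrite -big_distrr /=. ring.
apply/eqP; rewrite -(eqn_pmul2l (_ : 0 < 4)) //; apply/eqP.
by rewrite -e h.
Qed.

Definition Rs (x y : nat) : bool := (x <= y) && (y != x.+1).
Definition Hc l m x := #|[pred t : l.-tuple 'I_m | path Rs x (map (@nat_of_ord m) t)]|.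
Definition Dc l k := \sum_(0 <= i < l.+1) 'C(l,i) * 'C(k - i, i).

Lemma HS K i : \sum_(0 <= j < K) 'C(j - i, i) = 'C(K - i, i.+1).
Proof.
elim: K => [|K IH]; first by rewrite big_geq // sub0n bin0n.
rewrite big_nat_recr //= IH.
case: (leqP i K) => h.
  have -> : K.+1 - i = (K - i).+1 by lia.
  by rewrite binS addnC.
have -> : K - i = 0 by lia.
have -> : K.+1 - i = 0 by lia.
rewrite !bin0n; clear IH; case: i h => // i h.
Qed.

Lemma Drec l k : Dc l.+1 k = Dc l k + \sum_(0 <= j < k.-1) Dc l j.
Proof.
have E : \sum_(0 <= j < k.-1) Dc l j = \sum_(0 <= i < l.+1) 'C(l,i) * 'C(k - i.+1, i.+1).
  rewrite /Dc exchange_big_nat /=.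
  apply: eq_big_nat => i _.
  rewrite -big_distrr /= HS. congr (_ * 'C(_, _)). lia.
rewrite E /Dc big_nat_recl // [X in _ = X + _]big_nat_recl //.
rewrite !bin0 !mul1n -addnA. congr (_ + _).
have -> : \sum_(0 <= i < l.+1) 'C(l.+1, i.+1) * 'C(k - i.+1, i.+1) =
  \sum_(0 <= i < l.+1) ('C(l, i.+1) * 'C(k - i.+1, i.+1) + 'C(l, i) * 'C(k - i.+1, i.+1)).
  apply: eq_big_nat => i _. by rewrite binS mulnDl.
rewrite big_split /=. congr (_ + _).
by rewrite big_nat_recr //= bin_small // mul0n addn0.
Qed.

Lemma Rsum x m (F : nat -> nat) : x < m ->
  \sum_(0 <= y < m) Rs x y * F y = F x + \sum_(x.+2 <= y < m) F y.
Proof.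
move=> hx.
rewrite (@big_cat_nat _ _ _ x) //=; last by lia.
rewrite big1_seq; last first.
  move=> y; rewrite mem_index_iota => /andP [_ hy].
  by rewrite /Rs (_ : (x <= y) = false) ?mul0n //; lia.
rewrite add0n big_ltn //=.
rewrite /Rs leqnn (_ : (x != x.+1) = true) ?mul1n; last by lia.
congr (_ + _).
case: (ltnP x.+1 m) => h.
  rewrite big_ltn //= eqxx andbF mul0n add0n.
  apply: eq_big_nat => y /andP [hy1 hy2].
  have h3 : x <= y by lia.
  have h4 : y != x.+1 by apply/eqP; lia.
  by rewrite h3 h4 mul1n.
by rewrite !big_geq //; lia.
Qed.

Lemma card_cons (T : finType) l (P : seq T -> bool) :
  #|[pred t : l.+1.-tuple T | P (tval t)]| = \sum_(y : T) #|[pred u : l.-tuple T | P (y :: tval u)]|.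
Proof.
rewrite -sum1_card.
rewrite (reindex (fun p : T * l.-tuple T => [tuple of p.1 :: p.2])) /=; last first.
  exists (fun t : l.+1.-tuple T => (thead t, [tuple of behead t])).
    move=> [x u] _ /=. congr pair. by apply: val_inj.
  move=> t _. by rewrite -tuple_eta.
rewrite big_mkcond.
transitivity (\sum_(y : T) \sum_(u : l.-tuple T) (if P (y :: tval u) then 1 else 0)).
  rewrite pair_bigA. by apply: eq_bigr => [[y u]] _ /=; rewrite inE.
apply: eq_bigr => y _.
rewrite -sum1_card [RHS]big_mkcond /=.
by apply: eq_bigr => u _; rewrite inE.
Qed.

Lemma Hrec l m x : Hc l.+1 m x = \sum_(0 <= y < m) Rs x y * Hc l m y.
Proof.
rewrite /Hc (@card_cons _ _ (fun s : seq 'I_m => path Rs x (map (@nat_of_ord m) s))).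
rewrite big_mkord. apply: eq_bigr => y _ /=.
case: (Rs x y) => /=; [rewrite mul1n | rewrite mul0n].
  by apply: eq_card => u; rewrite !inE.
by apply: eq_card0 => u; rewrite !inE.
Qed.

Lemma shift_sum l m x : x < m ->
  \sum_(x.+2 <= y < m) Dc l (m.-1 - y) = \sum_(0 <= j < (m.-1 - x).-1) Dc l j.
Proof.
move=> hx.
rewrite -{1}(add0n x.+2) big_addn.
have -> : (m.-1 - x).-1 = m - x.+2 by lia.
rewrite big_nat_rev /=.
apply: eq_big_nat => i hi. congr (Dc l _). lia.
Qed.

Lemma HD l m x : x < m -> Hc l m x = Dc l (m.-1 - x).
Proof.
elim: l x => [|l IH] x hx.
  rewrite /Hc /Dc big_nat1 bin0 bin0 mul1n.
  rewrite (eq_card (B := [pred t : 0.-tuple 'I_m | true])).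
    by rewrite card_tuple.
  by move=> t; rewrite !inE tuple0.
rewrite Hrec Drec.
rewrite (eq_big_nat _ _ (F2 := fun y => Rs x y * Dc l (m.-1 - y))); last first.
  by move=> y /andP [_ hy]; rewrite IH.
rewrite Rsum // shift_sum //.
Qed.

Lemma a_bs n : a n.+1 = bs n.
Proof.
rewrite /a.
rewrite (eq_card (B := [pred t : n.+1.-tuple 'I_n.+1 | sorted Rs (map (@nat_of_ord n.+1) t)])); last first.
  move=> t; rewrite !inE /is_multiset_seq /no_consecutive /multiset_seq.
  rewrite -sorted_relI.
  rewrite (_ : map (fun i : 'I_n.+1 => (nat_of_ord i).+1) t = map succn (map (@nat_of_ord n.+1) t)); last by rewrite -map_comp.
  rewrite sorted_map. apply: eq_sorted => u v /=. by rewrite /Rs ltnS eqSS.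
rewrite (@card_cons _ _ (fun s : seq 'I_n.+1 => sorted Rs (map (@nat_of_ord n.+1) s))).
rewrite -(big_mkord xpredT (fun y => Hc n n.+1 y)) /=.
rewrite (eq_big_nat _ _ (F2 := fun y => Dc n (n - y))); last first.
  by move=> y /andP [_ hy]; rewrite HD.
rewrite big_nat_rev /=.
rewrite (eq_big_nat _ _ (F2 := fun y => Dc n y)); last first.
  by move=> y /andP [_ hy]; congr (Dc n _); lia.
rewrite /Dc exchange_big_nat /= /bs.
apply: eq_big_nat => i _.
by rewrite -big_distrr /= HS /Fb.
Qed.

From Stdlib Require Import Reals Lra.
From Coquelicot Require Import Coquelicot.
Open Scope R_scope.

Lemma INR_sum (f : nat -> nat) n :
  INR (\sum_(0 <= k < n.+1) f k)%N = sum_f_R0 (fun k => INR (f k)) n.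
Proof.
elim: n => [|n IH]; first by rewrite big_nat1.
by rewrite big_nat_recr //= plus_INR IH.
Qed.

Lemma INR_expn (m n : nat) : INR (expn m n) = INR m ^ n.
Proof.
elim: n => [|n IH]; first by rewrite expn0.
by rewrite expnS mult_INR IH.
Qed.

Lemma convR n :
  INR (bs n.+1) + sum_f_R0 (fun k => INR (bs k) * INR (bs (n - k))) n = 3 ^ (S n).
Proof.
have h := conv n.+1.
apply (f_equal INR) in h.
rewrite plus_INR INR_expn INR_sum in h.
have e3 : INR 3 = 3 by simpl; lra.
rewrite e3 in h. rewrite -h.
f_equal. apply: sum_eq => i _. by rewrite mult_INR.
Qed.

Lemma bs_le n : INR (bs n) <= 3 ^ n.
Proof.
have h := conv n.
have : leq (bs n) (expn 3 n) by rewrite -h leq_addr.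
move/leP/le_INR. rewrite INR_expn.
have -> : INR 3 = 3 by simpl; lra.
done.
Qed.

Theorem theorem3 :
  exists r : R, 0 < r /\
    forall z : R, Rabs z < r ->
      is_series (fun n : nat => INR (a (S n)) * z ^ (S n))
        ((1 - 3 * z - sqrt (1 - 2 * z - 3 * z ^ 2)) / (6 * z - 2)).
Proof.
exists (1/10). split; first lra.
move=> z Hz.
set b := fun n => INR (bs n).
have b0 : b O = 1 by rewrite /b bs0.
have bpos : forall n, 0 <= b n by move=> n; apply: pos_INR.
set q := 3 * Rabs z.
have q0 : 0 <= q by rewrite /q; move: (Rabs_pos z); lra.
have q1 : q < 3/10 by rewrite /q; lra.
set u := fun n => b n * z ^ n.
have Hu : forall n, Rabs (u n) <= q ^ n.
  move=> n. rewrite /u /q Rabs_mult (Rabs_right (b n)); last by move: (bpos n); lra.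
  rewrite -RPow_abs Rpow_mult_distr.
  apply: Rmult_le_compat_r; first by apply: pow_le; apply: Rabs_pos.
  exact: bs_le.
have geo : is_series (fun n => q ^ n) (/ (1 - q)).
  apply: is_series_geom. rewrite Rabs_right; lra.
have exa : ex_series (fun n => Rabs (u n)).
  apply: (ex_series_le _ (fun n => q ^ n)); last by exists (/ (1 - q)).
  move=> n. rewrite /norm /= /abs /= Rabs_Rabsolu. exact: Hu.
have exu : ex_series u by apply: ex_series_Rabs.
set Sm := Series u.
have HS : is_series u Sm by apply: Series_correct.
have Sbound : Rabs Sm <= / (1 - q).
  apply: Rle_trans; first exact: Series_Rabs.
  rewrite -(is_series_unique _ _ geo).
  apply: Series_le; last by exists (/ (1 - q)).
  move=> n; split; [exact: Rabs_pos | exact: Hu].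
have Hc := is_series_mult u u Sm Sm HS HS exa exa.
have key : forall n, plus (u (S n)) (sum_f_R0 (fun k => u k * u (n - k)%nat) n * z) = (3 * z) ^ (S n).
  move=> n.
  have -> : sum_f_R0 (fun k => u k * u (n - k)%nat) n =
            z ^ n * sum_f_R0 (fun k => b k * b (n - k)%nat) n.
    rewrite scal_sum. apply: sum_eq => i hi.
    rewrite /u.
    have -> : z ^ n = z ^ i * z ^ (n - i)%nat.
      rewrite -pow_add. f_equal. lia.
    ring.
  have hc := convR n.
  rewrite /plus /=.
  transitivity (z ^ (S n) * (INR (bs n.+1) + sum_f_R0 (fun k => INR (bs k) * INR (bs (n - k))) n)).
    rewrite /u /b /=. ring.
  rewrite hc Rpow_mult_distr /=. ring.
have H1 : is_series (fun n => u (S n)) (Sm - 1).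
  apply: is_series_incr_1.
  have -> : plus (Sm - 1) (u 0%nat) = Sm by rewrite /plus /= /u b0 /=; ring.
  exact: HS.
have H2 := is_series_scal_r z _ _ Hc.
have H3 := is_series_plus _ _ _ _ H1 H2.
have H4 := is_series_ext _ _ _ key H3.
have H5 : is_series (fun n => (3 * z) ^ (S n)) (/ (1 - 3 * z) - 1).
  apply: is_series_incr_1.
  have -> : plus (/ (1 - 3 * z) - 1) ((3 * z) ^ 0) = / (1 - 3 * z) by rewrite /plus /=; ring.
  apply: is_series_geom.
  have : Rabs (3 * z) = q by rewrite /q Rabs_mult Rabs_right; lra.
  lra.
have Eq : plus (Sm - 1) (Sm * Sm * z) = / (1 - 3 * z) - 1.
  by rewrite -(is_series_unique _ _ H4) (is_series_unique _ _ H5).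
rewrite /plus /= in Eq.
have z3 : 0 < 1 - 3 * z by move: (Rle_abs z); lra.
have E : (Sm + Sm * Sm * z) * (1 - 3 * z) = 1.
  have -> : Sm + Sm * Sm * z = / (1 - 3 * z) by lra.
  field; lra.
have Az : Rabs (Sm * z) <= 1/7.
  rewrite Rabs_mult.
  have : / (1 - q) <= 10/7.
    apply: (Rmult_le_reg_l (1 - q)); first lra.
    rewrite Rinv_r; lra.
  move=> h. have := Rabs_pos Sm. have := Rabs_pos z.
  nra.
have Apos : 0 < 2 * (Sm * z) + 1 by move: (Rle_abs (Sm * z)) (Rabs_Ropp (Sm*z)) (Rle_abs (- (Sm*z))); lra.
set w := (2 * (Sm * z) + 1) * (1 - 3 * z).
have w0 : 0 <= w by rewrite /w; nra.
have wsq : 1 - 2 * z - 3 * z ^ 2 = w ^ 2.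
  have h : w ^ 2 - (1 - 2 * z - 3 * z ^ 2) = 4 * z * (1 - 3 * z) * ((Sm + Sm * Sm * z) * (1 - 3 * z) - 1)
    by rewrite /w; ring.
  rewrite E in h. lra.
rewrite wsq sqrt_pow2 //.
have -> : (1 - 3 * z - w) / (6 * z - 2) = Sm * z by rewrite /w; field; lra.
apply: (is_series_ext (fun n => u n * z)).
  move=> n. rewrite a_bs /u /b /=. ring.
exact: is_series_scal_r.
Qed.
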